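(* Let $r,k,s_1,\dots,s_k$ be nonnegative integers, $\Gamma$ the complete bipartite supernova quiver with these parameters, and $\boldsymbol\mu=(\mu^1,\dots,\mu^k)$ a $k$-tuple of nonzero partitions with $\mu^i=(\mu^i_1\ge\cdots\ge\mu^i_{s_i+1}\ge0)$. If $\mathbf{v}_{\boldsymbol\mu}$ is an imaginary root of $\Gamma$, then $r\geq|\mu^i|$ for all $i=1,\dots,k$.
   Context: $\Gamma$ has vertex set $I$ consisting of $(l)$, $l=1,\dots,r$, and $(i;j)$, $i=1,\dots,k$, $j=0,\dots,s_i$; edges: one between $(l)$ and $(i;0)$ for every $l,i$ and one between $(i;j)$ and $(i;j-1)$ for $1\le j\le s_i$. $\mathbf{v}_{\boldsymbol\mu}$: $v_{(l)}=1$, $v_{(i;0)}=|\mu^i|$, $v_{(i;j)}=|\mu^i|-\sum_{f=1}^j\mu^i_f$. Bilinear form: $(\mathbf{e}_a,\mathbf{e}_a)=2$, $(\mathbf{e}_a,\mathbf{e}_b)=-$(number of edges joining $a,b$) for $a\ne b$; Weyl group $W$ generated by $s_a(\lambda)=\lambda-(\lambda,\mathbf{e}_a)\mathbf{e}_a$. Imaginary roots are the vectors $\pm w(\delta)$ with $w\in W$ and $\delta$ a nonzero vector in $\mathbb{Z}_{\ge0}^I$ with connected support satisfying $(\mathbf{e}_a,\delta)\le0$ for all $a$. *)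

(* Defs.v *)
From mathcomp Require Import all_boot all_order all_algebra.
Set Implicit Arguments. Unset Strict Implicit. Unset Printing Implicit Defensive.
Import Order.TTheory GRing.Theory Num.Theory.
Local Open Scope ring_scope.

(* Vertex set of the complete bipartite supernova quiver:
   inl l  ~ (l),  l : 'I_r  (0-indexed version of l = 1..r)
   inr (i; j) ~ (i;j), i : 'I_k, j : 'I_(s i).+1  (j = 0..s_i) *)
Definition svert (r k : nat) (s : 'I_k -> nat) : finType :=
  ('I_r + @sigT (ordinal k) (fun i => ordinal (s i).+1))%type.
Arguments svert : clear implicits.

Definition sedges (r k : nat) (s : 'I_k -> nat) (a b : svert r k s) : nat :=
  match a, b with
  | inl _, inr (existT _ j) => (val j == 0)%N
  | inr (existT _ j), inl _ => (val j == 0)%N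
  | inr (existT i j), inr (existT i' j') =>
      (i == i') && ((val j == (val j').+1) || (val j' == (val j).+1))
  | inl _, inl _ => false
  end.

Definition cartan (r k : nat) (s : 'I_k -> nat) (a b : svert r k s) : int :=
  if a == b then 2 else - (sedges a b)%:Z.

Definition form_e (r k : nat) (s : 'I_k -> nat) (a : svert r k s)
  (lam : svert r k s -> int) : int :=
  \sum_(b : svert r k s) cartan a b * lam b.

Definition sref (r k : nat) (s : 'I_k -> nat) (a : svert r k s)
  (lam : svert r k s -> int) : svert r k s -> int :=
  fun x => lam x - (if x == a then form_e a lam else 0).

Definition wact (r k : nat) (s : 'I_k -> nat) (w : seq (svert r k s))
  (lam : svert r k s -> int) : svert r k s -> int :=
  foldr (fun a f => sref a f) lam w.

Definition conn_supp (r k : nat) (s : 'I_k -> nat) (d : svert r k s -> int) : Prop :=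
  forall a b, d a != 0 -> d b != 0 ->
    connect (fun x y => [&& (0 < sedges x y)%N, d x != 0 & d y != 0]) a b.

Definition imaginary_root (r k : nat) (s : 'I_k -> nat) (v : svert r k s -> int) : Prop :=
  exists (w : seq (svert r k s)) (d : svert r k s -> int),
    [/\ (forall a, 0 <= d a), (exists a, d a != 0), conn_supp d,
        (forall a, form_e a d <= 0) &
        ((forall x, v x = wact w d x) \/ (forall x, v x = - wact w d x))].

Definition psize (k : nat) (s : 'I_k -> nat) (mu : forall i : 'I_k, 'I_(s i).+1 -> nat)
  (i : 'I_k) : nat := \sum_(f < (s i).+1) mu i f.

(* dimension vector v_mu; mu i f is mu^i_{f+1} *)
Definition vmu (r k : nat) (s : 'I_k -> nat) (mu : forall i : 'I_k, 'I_(s i).+1 -> nat)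
  (a : svert r k s) : int :=
  match a with
  | inl _ => 1
  | inr (existT i j) => (psize mu i)%:Z - (\sum_(f < (s i).+1 | (f < val j)%N) mu i f)%:Z
  end.

(* Main.v *)
Require Import Defs.
From mathcomp Require Import all_boot all_order all_algebra ring zify.
From Stdlib Require Import Classical FunctionalExtensionality Eqdep_dec.
Set Implicit Arguments. Unset Strict Implicit. Unset Printing Implicit Defensive.
Import Order.TTheory GRing.Theory Num.Theory.
Local Open Scope ring_scope.

Arguments svert : simpl never.
Section Cox.
Variables (r k : nat) (s : 'I_k -> nat).
Notation V := (svert r k s).
Implicit Types (a b x : V) (l f g : V -> int) (w : seq V).

Lemma sedges_sym a b : sedges a b = sedges b a.
Proof.
case: a => [la|[i j]]; case: b => [lb|[i' j']] //=.
by rewrite eq_sym orbC.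
Qed.

Lemma sedges_aa a : sedges a a = 0%N.
Proof.
case: a => [la|[i j]] //=; rewrite eqxx /=.
by rewrite orbb (ltn_eqF (ltnSn _)).
Qed.

Lemma cartan_sym a b : cartan a b = cartan b a.
Proof. by rewrite /cartan eq_sym sedges_sym. Qed.

Lemma cartan_aa a : cartan a a = 2.
Proof. by rewrite /cartan eqxx. Qed.

Lemma cartan_off a b : a != b -> cartan a b = 0 \/ cartan a b = -1.
Proof.
rewrite /cartan => /negbTE ->.
case: a => [la|[i j]]; case: b => [lb|[i' j']] /=; try by left.
- by case: (_ == _); [right|left].
- by case: (_ == _); [right|left].
- by case: (_ && _); [right|left].
Qed.

Definition ev b : V -> int := fun x => if x == b then 1 else 0.

Lemma form_lin a (al be : int) f g :
  form_e a (fun x => al * f x + be * g x) = al * form_e a f + be * form_e a g.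
Proof.
rewrite /form_e !mulr_sumr -big_split /=; apply: eq_bigr => b _; ring.
Qed.

Lemma form_ev a b : form_e a (ev b) = cartan a b.
Proof.
rewrite /form_e (bigD1 b) //= /ev eqxx mulr1 big1 ?addr0 // => x /negbTE ->.
by rewrite mulr0.
Qed.

Lemma srefE a f : sref a f = fun x => f x - form_e a f * ev a x.
Proof.
apply: functional_extensionality => x; rewrite /sref /ev.
by case: (x == a); rewrite ?mulr1 ?mulr0.
Qed.

Lemma sref_lin a (al be : int) f g :
  sref a (fun x => al * f x + be * g x) = fun x => al * sref a f x + be * sref a g x.
Proof.
rewrite !srefE form_lin; apply: functional_extensionality => x; ring.
Qed.

Lemma wact_lin w (al be : int) f g :
  wact w (fun x => al * f x + be * g x) = fun x => al * wact w f x + be * wact w g x.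
Proof. by elim: w => [|a w IH] //=; rewrite IH sref_lin. Qed.

Lemma wact_cat w1 w2 f : wact (w1 ++ w2) f = wact w1 (wact w2 f).
Proof. by rewrite /wact foldr_cat. Qed.

Lemma wact_rcons w a f : wact (rcons w a) f = wact w (sref a f).
Proof. by rewrite /wact foldr_rcons. Qed.

Definition eqw w1 w2 := forall f, wact w1 f = wact w2 f.

Lemma eqw_cong w1 w2 p q : eqw w1 w2 -> eqw (p ++ w1 ++ q) (p ++ w2 ++ q).
Proof. by move=> H f; rewrite !wact_cat H. Qed.

Lemma sref_val a f x : sref a f x = f x - form_e a f * ev a x.
Proof. by rewrite srefE. Qed.

Lemma form_sref b a f : form_e b (sref a f) = form_e b f - form_e a f * cartan b a.
Proof.
have -> : sref a f = fun x => 1 * f x + (- form_e a f) * ev a x.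
  by rewrite srefE; apply: functional_extensionality => x; ring.
by rewrite form_lin form_ev; ring.
Qed.

Lemma rel_aa a : eqw [:: a; a] [::].
Proof.
move=> f /=; apply: functional_extensionality => x.
rewrite sref_val form_sref cartan_aa !sref_val /ev; case: (x == a); ring.
Qed.

Lemma rel_comm a b : cartan a b = 0 -> eqw [:: a; b] [:: b; a].
Proof.
move=> c0 f /=; apply: functional_extensionality => x.
rewrite !sref_val !form_sref c0 cartan_sym c0 /ev.
case: (x == a); case: (x == b); ring.
Qed.

Lemma rel_braid a b : cartan a b = -1 -> eqw [:: a; b; a] [:: b; a; b].
Proof.
move=> c1 f /=; apply: functional_extensionality => x.
rewrite !sref_val !form_sref !cartan_aa c1 cartan_sym c1 /ev.
case: (x == a); case: (x == b); ring.
Qed.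


Lemma srefK a f : sref a (sref a f) = f.
Proof. exact: (rel_aa a f). Qed.

Lemma sref_comm a b f : cartan a b = 0 -> sref a (sref b f) = sref b (sref a f).
Proof. by move=> H; exact: (rel_comm H f). Qed.

Lemma sref_braid a b f : cartan a b = -1 ->
  sref a (sref b (sref a f)) = sref b (sref a (sref b f)).
Proof. by move=> H; exact: (rel_braid H f). Qed.

Definition red w := forall w', eqw w w' -> (size w <= size w')%N.

Lemma minP (P : nat -> Prop) n : P n -> exists m, P m /\ forall j, P j -> (m <= j)%N.
Proof.
elim/ltn_ind: n => n IH Pn.
case: (classic (exists j, (j < n)%N /\ P j)) => [[j [lt Pj]]|H].
  exact: (IH j lt Pj).
exists n; split => // j Pj; rewrite leqNgt; apply/negP => lt; apply: H; by exists j.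
Qed.

Lemma ex_red w : exists w', eqw w w' /\ red w'.
Proof.
have [m [[w' [E S]] Hm]] := @minP (fun m => exists w', eqw w w' /\ size w' = m) (size w)
  (ex_intro _ w (conj (fun f => erefl) erefl)).
exists w'; split => // w'' E'; rewrite S; apply: Hm; exists w''; split => //.
by move=> f; rewrite E E'.
Qed.

Lemma ev_ge0 a x : 0 <= ev a x.
Proof. by rewrite /ev; case: (x == a). Qed.

Lemma dihedral a b u : a != b -> all (fun c => (c == a) || (c == b)) u -> red u ->
  (forall u2, eqw (rcons u a) u2 -> (size u <= size u2)%N) ->
  exists al be : int, [/\ 0 <= al, 0 <= be &
    wact u (ev a) = fun x => al * ev a x + be * ev b x].
Proof.
move=> nab; case/lastP: u => [|u1 c].
  move=> _ _ _; exists 1, 0; split => //=.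
  by apply: functional_extensionality => x; ring.
rewrite all_rcons => /andP [Ic Iu1] Hred Hlong.
have [ca|cb] : c = a \/ c = b by case/orP: Ic => /eqP ->; [left|right].
  subst c; have E : eqw (rcons (rcons u1 a) a) u1 by move=> f; rewrite !wact_rcons srefK.
  by have := Hlong _ E; rewrite size_rcons ltnn.
subst c; case/lastP: u1 Iu1 Hred Hlong => [|u2 c2].
  move=> _ _ _; exists 1, (- cartan b a); split => //.
    by rewrite oppr_ge0; case: (cartan_off (a:=b) (b:=a) _) => [|->|->] //; rewrite eq_sym.
  rewrite /= srefE form_ev; apply: functional_extensionality => x; ring.
rewrite all_rcons => /andP [Ic2 Iu2] Hred Hlong.
have [c2b|c2a] : c2 = b \/ c2 = a by case/orP: Ic2 => /eqP ->; [right|left].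
  subst c2; have E : eqw (rcons (rcons u2 b) b) u2 by move=> f; rewrite !wact_rcons srefK.
  by have := Hred _ E; rewrite !size_rcons ltnNge leqnSn.
subst c2; case/lastP: u2 Iu2 Hred Hlong => [|u3 c3].
  move=> _ _ Hlong.
  have [c0|c1] : cartan a b = 0 \/ cartan a b = -1 by exact: cartan_off.
    have E : eqw (rcons [:: a; b] a) [:: b] by move=> f /=; rewrite sref_comm // srefK.
    by have := Hlong _ E.
  exists 0, 1; split => //; apply: functional_extensionality => x.
  rewrite /= !sref_val !form_sref !form_ev cartan_aa cartan_sym c1 /ev.
  by case: (x == a); case: (x == b); ring.
rewrite all_rcons => /andP [Ic3 Iu3] Hred Hlong.
have [c3a|c3b] : c3 = a \/ c3 = b by case/orP: Ic3 => /eqP ->; [left|right].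
  subst c3; have E : eqw (rcons (rcons (rcons u3 a) a) b) (rcons u3 b).
    by move=> f; rewrite !wact_rcons srefK.
  by have := Hred _ E; rewrite !size_rcons ltnNge leqW.
subst c3.
have [c0|c1] : cartan a b = 0 \/ cartan a b = -1 by exact: cartan_off.
  have E : eqw (rcons (rcons (rcons u3 b) a) b) (rcons u3 a).
    by move=> f; rewrite !wact_rcons (sref_comm (a:=b)) ?srefK // cartan_sym.
  by have := Hred _ E; rewrite !size_rcons ltnNge leqW.
suff E : eqw (rcons (rcons (rcons (rcons u3 b) a) b) a) (rcons (rcons u3 a) b).
  by have := Hlong _ E; rewrite !size_rcons ltnn.
move=> f; rewrite !wact_rcons; congr (wact u3 _).
by rewrite -(sref_braid (a:=a) (b:=b)) // srefK.
Qed.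


Lemma posroot n : forall p a, size p = n -> red p ->
  (forall q, eqw (rcons p a) q -> (n <= size q)%N) -> forall x, 0 <= wact p (ev a) x.
Proof.
elim/ltn_ind: n => n IH p a.
case/lastP: p => [|p' b] Hs Hred Hlong.
  by move=> x; exact: ev_ge0.
rewrite size_rcons in Hs.
have nba : b != a.
  apply/negP => /eqP E; subst b.
  have E : eqw (rcons (rcons p' a) a) p' by move=> f; rewrite !wact_rcons srefK.
  by have := Hlong _ E; rewrite -Hs ltnn.
pose I := fun c : V => (c == a) || (c == b).
pose C := fun m => exists q u, [/\ size q = m, all I u, eqw (rcons p' b) (q ++ u)
   & (size q + size u)%N = n].
have C0 : C (size p').
  exists p', [:: b]; split => //; first by rewrite /= /I eqxx orbT.
    by move=> f; rewrite cats1.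
  by rewrite addn1.
have [m [[q [u [Sq Iu Eq Sn]]] Hmin]] := minP C0.
have Hmn : (m < n)%N by rewrite -Hs ltnS; exact: Hmin.
have Hqt : forall t, I t -> forall q2, eqw (rcons q t) q2 -> (m <= size q2)%N.
  move=> t It q2 Eq2; rewrite leqNgt; apply/negP => lt.
  have E : eqw (rcons p' b) (q2 ++ t :: u).
    move=> f; rewrite Eq wact_cat wact_cat /= -Eq2 wact_rcons srefK.
    by [].
  have Hge := Hred _ E; rewrite size_rcons size_cat /= in Hge.
  have : C (size q2).
    exists q2, (t :: u); split => //=; first by rewrite It.
    have {}Hge : ((size p').+1 <= size q2 + (size u).+1)%N := Hge.
    change ((size q2 + (size u).+1)%N = n); lia.
  by move/Hmin; rewrite leqNgt lt.
have redq : red q.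
  move=> q' Eq'; have E : eqw (rcons p' b) (q' ++ u) by move=> f; rewrite Eq !wact_cat Eq'.
  have := Hred _ E; rewrite size_rcons size_cat; lia.
have Ia : I a by rewrite /I eqxx.
have Ib : I b by rewrite /I eqxx orbT.
have Pa := IH m Hmn q a Sq redq (Hqt a Ia).
have Pb := IH m Hmn q b Sq redq (Hqt b Ib).
have redu : red u.
  move=> u' Eu'; have E : eqw (rcons p' b) (q ++ u') by move=> f; rewrite Eq !wact_cat Eu'.
  have := Hred _ E; rewrite size_rcons size_cat; lia.
have Hu : forall u2, eqw (rcons u a) u2 -> (size u <= size u2)%N.
  move=> u2 Eu2; have E : eqw (rcons (rcons p' b) a) (q ++ u2).
    by move=> f; rewrite wact_rcons Eq !wact_cat -Eu2 wact_rcons.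
  have := Hlong _ E; rewrite size_cat; lia.
have nab : a != b by rewrite eq_sym.
have [al [be [al0 be0 Eu]]] := dihedral nab Iu redu Hu.
move=> x; rewrite Eq wact_cat Eu wact_lin.
by rewrite addr_ge0 ?mulr_ge0.
Qed.

Lemma antidom_red lam : (forall a, form_e a lam <= 0) ->
  forall p, red p -> forall x, lam x <= wact p lam x.
Proof.
move=> Hl; elim/last_ind => [|p t IH] Hred x; first by [].
have redp : red p.
  move=> q Eq; have E : eqw (rcons p t) (rcons q t) by move=> f; rewrite !wact_rcons Eq.
  by have := Hred _ E; rewrite !size_rcons.
have H0 : forall y, 0 <= wact p (ev t) y.
  apply: (posroot (erefl (size p)) redp) => q Eq.
  by move: (Hred _ Eq); rewrite size_rcons => /ltnW.
rewrite wact_rcons.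
have -> : sref t lam = fun x => 1 * lam x + (- form_e t lam) * ev t x.
  by rewrite srefE; apply: functional_extensionality => y; ring.
rewrite wact_lin mul1r.
apply: (le_trans (IH redp x)); rewrite lerDl mulr_ge0 //.
by rewrite oppr_ge0.
Qed.

Lemma antidom lam : (forall a, form_e a lam <= 0) ->
  forall w x, lam x <= wact w lam x.
Proof.
move=> Hl w x; have [w' [E R]] := ex_red w.
by rewrite E; exact: antidom_red.
Qed.

End Cox.

Lemma sum_pick n m (G : nat -> int) :
  \sum_(j < n) ((val j == m : nat)%:Z * G j) = if (m < n)%N then G m else 0.
Proof.
elim: n => [|n IH]; first by rewrite big_ord0.
rewrite big_ord_recr /= IH.
case: (ltngtP m n) => [lt|gt|->].
- by rewrite /= mul0r addr0 ltnS ltnW.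
- by rewrite /= mul0r addr0 ltnS leqNgt gt.
- by rewrite /= mul1r add0r ltnSn.
Qed.

Arguments svert : simpl never.

Lemma neqS2 n : (n == n.+2) = false.
Proof. by elim: n. Qed.

Lemma sum_chain n j (G : nat -> int) : (j < n)%N ->
  \sum_(j' < n) (((j == (val j').+1) || (val j' == j.+1) : nat)%:Z * G j') =
  (if (0 < j)%N then G j.-1 else 0) + (if (j.+1 < n)%N then G j.+1 else 0).
Proof.
move=> jn.
have -> : \sum_(j' < n) (((j == (val j').+1) || (val j' == j.+1) : nat)%:Z * G j') =
  \sum_(j' < n) ((((val j' == j.-1) && (0 < j)%N) : nat)%:Z * G j') +
  \sum_(j' < n) ((val j' == j.+1 : nat)%:Z * G j').
  rewrite -big_split /=; apply: eq_bigr => j' _.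
  case: j jn => [|j] jn /=.
    by rewrite ltnn andbF mul0r add0r.
  rewrite ltn0Sn andbT eqSS; case: (eqVneq (val j') j) => [->|ne].
    by rewrite neqS2 /= mul1r mul0r addr0.
  by rewrite /= mul0r add0r.
rewrite sum_pick; congr (_ + _).
case: j jn => [|j] jn /=.
  by rewrite big1 // => j' _; rewrite andbF mul0r.
under eq_bigr => j' _ do rewrite andbT.
by rewrite sum_pick; rewrite ltnW.
Qed.

Section Comp.
Variables (r k : nat) (s : 'I_k -> nat).
Notation V := (svert r k s).

Lemma sumsig (F : {i : 'I_k & 'I_(s i).+1} -> int) :
  \sum_(p : {i : 'I_k & 'I_(s i).+1}) F p = \sum_(i < k) \sum_(j < (s i).+1) F (existT _ i j).
Proof.
rewrite (@sig_big_dep _ 0 +%R _ (fun i => ordinal (s i).+1) xpredT (fun i => xpredT)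
   (fun i (j : 'I_(s i).+1) => F (existT _ i j))).
by apply: eq_big => // -[i j].
Qed.

Lemma cartan_other (i i0 : 'I_k) (j : 'I_(s i).+1) (j0 : 'I_(s i0).+1) : i0 != i ->
  cartan (inr (existT _ i j) : V) (inr (existT _ i0 j0)) = 0.
Proof.
move=> ne; rewrite /cartan.
have -> : (inr (existT _ i j) == inr (existT _ i0 j0) :> V) = false.
  apply/negbTE/eqP => -[E]; rewrite E eqxx in ne; done.
by rewrite /sedges eq_sym (negbTE ne).
Qed.

Lemma cartan_same (i : 'I_k) (j j0 : 'I_(s i).+1) :
  cartan (inr (existT _ i j) : V) (inr (existT _ i j0)) =
  if j0 == j then 2 else - ((val j == (val j0).+1) || (val j0 == (val j).+1) : nat)%:Z.
Proof.
rewrite /cartan.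
have -> : (inr (existT _ i j) == inr (existT _ i j0) :> V) = (j0 == j).
  have -> : (inr (existT _ i j) == inr (existT _ i j0) :> V) =
    (existT (fun i => 'I_(s i).+1) i j0 == existT _ i j) by rewrite eq_sym.
  exact: (@eq_Tagged _ (fun i => 'I_(s i).+1) (existT (fun i => 'I_(s i).+1) i j0) j).
by rewrite /sedges eqxx.
Qed.

Lemma formE_chain (lam : V -> int) (G : nat -> int) (i : 'I_k) (j : 'I_(s i).+1) :
  (forall l, lam (inl l) = 1) ->
  (forall j' : 'I_(s i).+1, lam (inr (existT _ i j')) = G j') ->
  form_e (inr (existT _ i j)) lam =
  2 * G j - ((val j == 0 : nat)%:Z * r%:Z) - (if (0 < j)%N then G j.-1 else 0)
    - (if (j < s i)%N then G j.+1 else 0).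
Proof.
move=> Hl HG.
rewrite /form_e big_sumType /= sumsig.
have -> : \sum_(l < r) cartan (inr (existT _ i j) : V) (inl l) * lam (inl l) =
   - ((val j == 0 : nat)%:Z * r%:Z).
  under eq_bigr => l _ do rewrite Hl mulr1 /cartan /=.
  by rewrite sumr_const card_ord mulNrn pmulrn mulrzz.
rewrite (bigD1 i) //= [X in _ + (_ + X)]big1 ?addr0; last first.
  by move=> i0 ne; apply: big1 => j0 _; rewrite cartan_other // mul0r.
under eq_bigr => j0 _ do rewrite cartan_same HG.
have -> : \sum_(j0 < (s i).+1) (if j0 == j then 2 else
     - ((val j == (val j0).+1) || (val j0 == (val j).+1) : nat)%:Z) * G j0 =
  2 * \sum_(j0 < (s i).+1) ((val j0 == val j : nat)%:Z * G j0) -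
  \sum_(j0 < (s i).+1) (((val j == (val j0).+1) || (val j0 == (val j).+1) : nat)%:Z * G j0).
  rewrite mulr_sumr -sumrB; apply: eq_bigr => j0 _.
  case: (eqVneq j0 j) => [->|ne].
    by rewrite eqxx orbb (ltn_eqF (ltnSn _)) /=; ring.
  have -> : (val j0 == val j) = false by rewrite val_eqE (negbTE ne).
  by rewrite /=; ring.
rewrite sum_pick ltn_ord sum_chain ?ltn_ord // ltnS.
ring.
Qed.
End Comp.

Unset Implicit Arguments.
Section Chain.
Variables (r k : nat) (s : 'I_k -> nat) (mu : forall i : 'I_k, 'I_(s i).+1 -> nat) (i : 'I_k).
Notation V := (svert r k s).

Definition Slt t : nat := \sum_(f < (s i).+1 | (f < t)%N) mu i f.

Definition chainv (t : nat) (x : V) : int :=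
  match x with
  | inl _ => 1
  | inr p => let: existT i' j' := p in
     if (i' == i) && (val j' < t)%N
     then r%:Z - (\sum_(f < (s i').+1 | (f <= j')%N) mu i' f)%:Z
     else vmu mu (inr (existT _ i' j') : V)
  end.

Definition vert (t : nat) : V := inr (existT _ i (inord t)).

Lemma Slt_S t : (t <= s i)%N -> Slt t.+1 = (Slt t + mu i (inord t))%N.
Proof.
move=> ts; rewrite /Slt (bigD1 (inord t)) /=; last by rewrite inordK.
rewrite addnC; congr (_ + _)%N; apply: eq_bigl => f.
rewrite ltnS leq_eqVlt -val_eqE /= inordK //.
by case: (eqVneq (val f) t) => [->|ne] /=; rewrite ?ltnn ?andbF ?andbT.
Qed.

Lemma Slt_full : Slt (s i).+1 = psize mu i.
Proof. by rewrite /Slt /psize; apply: eq_bigl => f; rewrite ltn_ord. Qed.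

Lemma Slt0 : Slt 0 = 0%N.
Proof. by rewrite /Slt big_pred0. Qed.

Lemma chain0 : chainv 0 = vmu mu.
Proof.
by apply: functional_extensionality => -[l|[i' j']] //=; rewrite andbF.
Qed.

Lemma chain_step t : (t <= s i)%N -> sref (vert t) (chainv t) = chainv t.+1.
Proof.
move=> ts.
have tlt : (t < (s i).+1)%N by rewrite ltnS.
pose G := fun j' : nat => if (j' < t)%N
   then r%:Z - (\sum_(f < (s i).+1 | (f <= j')%N) mu i f)%:Z
   else (psize mu i)%:Z - (Slt j')%:Z.
have HG : forall j' : 'I_(s i).+1, chainv t (inr (existT _ i j')) = G (val j').
  by move=> j'; rewrite /= eqxx /G /=; case: (val j' < t)%N.
have FE := @formE_chain r k s (chainv t) G i (inord t) (fun l => erefl _) HG.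
rewrite inordK // in FE.
apply: functional_extensionality => -[l|[i' j']].
  by rewrite sref_val /ev /vert /= mulr0 subr0.
rewrite sref_val.
case: (eqVneq i' i) => [Ei|ne]; last first.
  have -> : ev (vert t) (inr (existT _ i' j')) = 0.
    rewrite /ev /vert; case: eqP => // -[E]; by rewrite E eqxx in ne.
  by rewrite mulr0 subr0 /= (negbTE ne).
subst i'.
case: (eqVneq (val j') t) => [Ej|ne]; last first.
  have -> : ev (vert t) (inr (existT _ i j')) = 0.
    rewrite /ev /vert; case: eqP => // -[E].
    have E' : j' = inord t by exact: (Eqdep_dec.inj_pair2_eq_dec _ (@eq_comparable _) _ _ _ _ E).
    have V' : val (inord t : 'I_(s i).+1) = t := inordK tlt.
    by rewrite E' V' eqxx in ne.
  rewrite mulr0 subr0 /= eqxx /= ltnS.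
  by rewrite [(val j' <= t)%N]leq_eqVlt (negbTE ne).
have Ej' : j' = inord t by apply: val_inj; rewrite /= inordK.
subst j'.
rewrite FE /ev /vert eqxx mulr1 /= eqxx inordK // ltnn ltnSn /=.
have HS : forall u, (\sum_(f < (s i).+1 | (f <= u)%N) mu i f)%N = Slt u.+1.
  by move=> u; rewrite /Slt; apply: eq_bigl => f; rewrite ltnS.
have HT : (if (t < s i)%N then G t.+1 else 0) = (psize mu i)%:Z - (Slt t.+1)%:Z.
  rewrite /G; have -> : (t.+1 < t)%N = false by rewrite ltnNge leqnSn.
  case: ltnP => // ge; have E : t = s i by apply/eqP; rewrite eqn_leq ts ge.
  by rewrite E Slt_full subrr.
have Gt : G t = (psize mu i)%:Z - (Slt t)%:Z by rewrite /G ltnn.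
rewrite HT Gt HS -/(Slt t) Slt_S // PoszD.
rewrite /G; clear FE HT Gt HG G Ej.
case: t ts tlt => [|t] ts tlt /=.
  by rewrite Slt0 /=; ring.
rewrite ltnSn HS; ring.
Qed.

Fixpoint wlist t : seq V := if t is t'.+1 then vert t' :: wlist t' else [::].

Lemma wact_chain t : (t <= (s i).+1)%N -> wact (wlist t) (vmu mu) = chainv t.
Proof.
elim: t => [|t IH] ht; first by rewrite chain0.
have ht' : (t <= s i)%N by rewrite -ltnS.
rewrite [wlist _]/= [wact _ _]/= IH; last exact: ltnW.
exact: chain_step.
Qed.
Lemma final_val : chainv (s i).+1 (vert (s i)) = r%:Z - (psize mu i)%:Z.
Proof.
have V' : val (inord (s i) : 'I_(s i).+1) = s i := inordK (ltnSn _).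
rewrite /vert [chainv _ _]/= eqxx (inordK (ltnSn _)) ltnSn andTb; congr (_ - Posz _).
by rewrite /psize; apply: eq_bigl => f; rewrite -ltnS ltn_ord.
Qed.

Lemma vmu_vert0 : vmu mu (vert 0) = (psize mu i)%:Z.
Proof.
have V' : val (inord 0 : 'I_(s i).+1) = 0%N := inordK (ltn0Sn _).
rewrite /vert [vmu _ _]/= (inordK (ltn0Sn _)) big_pred0 ?subr0 //.

Qed.

End Chain.
Set Implicit Arguments.

Set Implicit Arguments.

Theorem corollary2p8 (r k : nat) (s : 'I_k -> nat)
  (mu : forall i : 'I_k, 'I_(s i).+1 -> nat)
  (mu_dec : forall (i : 'I_k) (j1 j2 : 'I_(s i).+1), (j1 <= j2)%N -> (mu i j2 <= mu i j1)%N)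
  (mu_nz : forall i : 'I_k, (0 < psize mu i)%N) :
  imaginary_root (vmu (r:=r) mu) -> forall i : 'I_k, (psize mu i <= r)%N.
Proof.
move=> [w [d [d0 _ _ dneg Hv]]] i.
have A := antidom dneg.
case: Hv => Hv.
  have Ev : vmu (r:=r) mu = wact w d by apply: functional_extensionality.
  have := A (wlist r k s i (s i).+1 ++ w) (vert r k s i (s i)).
  rewrite wact_cat -Ev wact_chain // final_val => H.
  have := le_trans (d0 _) H.
  by rewrite subr_ge0 lez_nat.
exfalso.
have := Hv (vert r k s i 0); rewrite vmu_vert0 => E.
have := le_trans (d0 (vert r k s i 0)) (A w _).
by rewrite -oppr_le0 -E lez_nat leqNgt mu_nz.
Qed.
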